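(* Let $f:\mathbb{R}^d\to\mathbb{R}$ and $\phi:\mathbb{R}\to\mathbb{R}$ be twice differentiable and let $L\coloneqq\phi\circ f$. Let $\alpha_\phi(x)$ be a Newton stepsize schedule for $L$. Define, wherever the expression is defined, \[ \alpha(x)\coloneqq\alpha_\phi(x)\left(1+\frac{\phi''(f(x))}{\phi'(f(x))}\,\|\nabla f(x)\|_x^{*2}\right)^{-1}. \] Assume $\nabla f(x)\in\mathrm{Range}(\nabla^2 f(x))$ at every point $x$ where a step is taken. Then the Newton method on $f$ with stepsize schedule $\alpha(x)$ produces the identical sequence of iterates to the Newton method on $L$ with stepsize schedule $\alpha_\phi(x)$.
   Context: $\mathbf{B}^\dagger$ denotes the Moore–Penrose pseudoinverse. $\|g\|_x^{*2}\coloneqq\langle g,[\nabla^2 f(x)]^{\dagger}g\rangle$. The Newton method with stepsize schedule $\beta(\cdot)$ on a function $F$ is the iteration $x^{k+1}=x^k-\beta(x^k)[\nabla^2F(x^k)]^{\dagger}\nabla F(x^k)$, started from the same initial point for both methods. *)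

(* Defs.v *)
From HB Require Import structures.
From mathcomp Require Import all_boot all_order all_algebra.
From mathcomp Require Import all_classical all_reals all_analysis.
Set Implicit Arguments. Unset Strict Implicit. Unset Printing Implicit Defensive.
Import Order.TTheory GRing.Theory Num.Theory.
Import numFieldNormedType.Exports.
Local Open Scope classical_set_scope.
Local Open Scope ring_scope.

Section Defs.
Variables (R : realType) (d : nat).

Definition evec (i : 'I_d) : 'cV[R]_d := delta_mx i ord0.

Definition grad (F : 'cV[R]_d -> R) (x : 'cV[R]_d) : 'cV[R]_d :=
  \col_i ('D_(evec i) F x).

Definition hess (F : 'cV[R]_d -> R) (x : 'cV[R]_d) : 'M[R]_d :=
  \matrix_(i, j) ('D_(evec j) (fun y => 'D_(evec i) F y) x).

Definition penrose (A B : 'M[R]_d) : Prop :=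
  [/\ A *m B *m A = A, B *m A *m B = B, (A *m B)^T = A *m B & (B *m A)^T = B *m A].

(* Moore--Penrose pseudoinverse (the unique matrix satisfying the Penrose
   conditions; it exists for every real matrix) *)
Definition pinv (A : 'M[R]_d) : 'M[R]_d := xget 0 [set B | penrose A B].

Definition dnorm2 (f : 'cV[R]_d -> R) (x g : 'cV[R]_d) : R :=
  (g^T *m pinv (hess f x) *m g) ord0 ord0.

Fixpoint newton (F : 'cV[R]_d -> R) (beta : 'cV[R]_d -> R) (x0 : 'cV[R]_d)
  (k : nat) : 'cV[R]_d :=
  match k with
  | 0 => x0
  | k'.+1 => let x := newton F beta x0 k' in
             x - beta x *: (pinv (hess F x) *m grad F x)
  end.

Definition alpha_sched (f : 'cV[R]_d -> R) (phi : R -> R)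
  (alpha_phi : 'cV[R]_d -> R) (x : 'cV[R]_d) : R :=
  alpha_phi x *
  (1 + (derive1 (derive1 phi)) (f x) / (derive1 phi) (f x) * dnorm2 f x (grad f x))^-1.

End Defs.

(* Main.v *)
Require Import Defs.
From HB Require Import structures.
From mathcomp Require Import all_boot all_order all_algebra.
From mathcomp Require Import all_classical all_reals all_analysis.
From mathcomp Require Import ring lra.
Import Order.TTheory GRing.Theory Num.Theory.
Import numFieldNormedType.Exports.
Module PA.
Set Implicit Arguments. Unset Strict Implicit. Unset Printing Implicit Defensive.
Local Open Scope ring_scope.

Section Gram.
Variable R : realFieldType.

Lemma selfdot0 n (w : 'rV[R]_n) : w *m w^T = 0 -> w = 0.
Proof.
move=> h; apply/rowP => j.
have := congr1 (fun (M : 'M[R]_1) => M ord0 ord0) h; rewrite !mxE => hs.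
have hge : forall k, predT k -> 0 <= w ord0 k * w^T k ord0.
  by move=> k _; rewrite mxE -expr2 sqr_ge0.
have := @psumr_eq0P _ _ predT (fun k => w ord0 k * w^T k ord0) hge hs j isT.
rewrite /= !mxE -expr2 => /eqP; rewrite sqrf_eq0 => /eqP -> //; by rewrite mxE.
Qed.

Lemma gram_unit r n (G : 'M[R]_(r, n)) : row_free G -> G *m G^T \in unitmx.
Proof.
move=> fG; rewrite -row_free_unit; apply: inj_row_free => v h.
have : (v *m G) *m (v *m G)^T = 0 by rewrite trmx_mul mulmxA -(mulmxA v) h mul0mx.
move/selfdot0 => h2; apply: (row_free_inj fG); by rewrite h2 mul0mx.
Qed.
End Gram.

Section Pinv.
Variable R : realFieldType.
Definition penroseR n (A B : 'M[R]_n) : Prop :=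
  [/\ A *m B *m A = A, B *m A *m B = B, (A *m B)^T = A *m B & (B *m A)^T = B *m A].

Lemma penrose_fact r n (F : 'M[R]_(n, r)) (G : 'M[R]_(r, n)) :
  row_free G -> row_free F^T -> exists B, penroseR (F *m G) B.
Proof.
move=> fG fF.
have uG := gram_unit fG.
have uF : F^T *m F \in unitmx by have := gram_unit fF; rewrite trmxK.
set P := invmx (G *m G^T); set Q := invmx (F^T *m F).
have PT : P^T = P by rewrite /P trmx_inv trmx_mul trmxK.
have QT : Q^T = Q by rewrite /Q trmx_inv trmx_mul trmxK.
have eAB : (F *m G) *m (G^T *m P *m Q *m F^T) = F *m Q *m F^T.
  by rewrite !mulmxA -(mulmxA F G) -(mulmxA F) mulmxV // mulmx1.
have eBA : (G^T *m P *m Q *m F^T) *m (F *m G) = G^T *m P *m G.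
  by rewrite !mulmxA -(mulmxA _ F^T F) -(mulmxA _ Q) /Q mulVmx // mulmx1.
exists (G^T *m P *m Q *m F^T); split.
- by rewrite eAB !mulmxA -(mulmxA _ F^T F) -(mulmxA F Q) /Q mulVmx // mulmx1.
- have e : P *m (G *m G^T) = 1%:M by rewrite /P mulVmx.
  by rewrite eBA -!mulmxA (mulmxA G) (mulmxA P) e mul1mx.
- by rewrite eAB !trmx_mul trmxK QT mulmxA.
- by rewrite eBA !trmx_mul trmxK PT mulmxA.
Qed.

Lemma penrose_exists n (A : 'M[R]_n) : exists B, penroseR A B.
Proof.
have fF : row_free (col_base A)^T.
  by rewrite /row_free mxrank_tr; exact: col_base_full.
by have := penrose_fact (row_base_free A) fF; rewrite mulmx_base.
Qed.
End Pinv.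

Section Key.
Variable R : realFieldType.

Lemma pinv_apply n (A B : 'M[R]_n) (g y z : 'cV[R]_n) :
  penroseR A B -> A *m y = g -> y = A^T *m z -> B *m g = y.
Proof.
case=> P1 P2 P3 P4 hy hz.
by rewrite -hy hz !mulmxA -P4 -trmx_mul mulmxA P1.
Qed.

Lemma mul_mx11 n (g : 'cV[R]_n) (M : 'M[R]_1) : g *m M = M ord0 ord0 *: g.
Proof. by rewrite {1}[M]mx11_scalar mul_mx_scalar. Qed.

Lemma key n (H HB A AB : 'M[R]_n) (g v : 'cV[R]_n) (c e : R) :
  H^T = H -> penroseR H HB -> g = H *m v -> c != 0 ->
  let s := (g^T *m HB *m g) ord0 ord0 in
  c + e * s != 0 ->
  A = c *: H + e *: (g *m g^T) -> penroseR A AB ->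
  AB *m g = (c + e * s)^-1 *: (HB *m g).
Proof.
move=> HT pH gv c0 s cs0 eA pA.
have [Q1 Q2 Q3 Q4] := pH.
have HHBg : H *m (HB *m g) = g by rewrite gv !mulmxA Q1.
set y := (c + e * s)^-1 *: (HB *m g).
have Ay : A *m y = g.
  have gs : g *m g^T *m (HB *m g) = s *: g.
    by rewrite -mulmxA mul_mx11 /s mulmxA.
  rewrite eA /y -scalemxAr mulmxDl -!scalemxAl HHBg gs scalerA -scalerDl.
  by rewrite scalerA mulVf // scale1r.
have AT : A^T = A by rewrite eA linearD /= !linearZ /= HT trmx_mul trmxK.
set q := ((HB *m g)^T *m (HB *m g)) ord0 ord0.
set a := (c * (c + e * s))^-1.
apply: (pinv_apply pA Ay (z := a *: (HB^T *m HB *m g) - (a * e * q) *: y)).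
have HHB : H *m HB^T = HB *m H by rewrite -Q4 trmx_mul HT.
have A1 : A *m (HB^T *m HB *m g) = c *: (HB *m g) + (e * q) *: g.
  rewrite eA mulmxDl -!scalemxAl !mulmxA HHB Q2 -scalerA; congr (_ + _ *: _).
  by rewrite -!mulmxA mul_mx11 /q trmx_mul !mulmxA.
rewrite AT mulmxBr -!scalemxAr A1 scalemxAr -/y Ay scalerDr !scalerA -addrA.
rewrite [X in _ + X](_ : _ = 0) ?addr0; last by rewrite mulrA subrr.
by rewrite /y /a; congr (_ *: _); rewrite invfM mulrAC mulVf // mul1r.
Qed.
End Key.

Lemma final_step (R : realFieldType) n (AB HB : 'M[R]_n) (g : 'cV[R]_n) (c e s al : R) :
  c != 0 -> c + e * s != 0 -> AB *m g = (c + e * s)^-1 *: (HB *m g) ->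
  (al * (1 + e / c * s)^-1) *: (HB *m g) = al *: (AB *m (c *: g)).
Proof.
move=> c0 cs K.
rewrite -scalemxAr K !scalerA; congr (_ *: _).
by field; rewrite cs c0.
Qed.

End PA.
Import PA.

Module PB.
Set Implicit Arguments. Unset Strict Implicit. Unset Printing Implicit Defensive.
Local Open Scope classical_set_scope.
Local Open Scope ring_scope.

Section An.
Variables (R : realType) (d : nat).
Local Notation V := 'cV[R]_d.

Lemma norm_entry m n (M : 'M[R]_(m, n)) i j : `|M i j| <= `|M|.
Proof.
rewrite [leRHS]/Num.Def.normr/= mx_normrE.
by apply: le_trans; last exact: (le_bigmax _ _ (i, j)).
Qed.

Lemma norm_evec (i : 'I_d) : `|evec R i| <= 1.
Proof.
rewrite [leLHS]/Num.Def.normr/= mx_normrE; apply: bigmax_le => //= -[a b] _.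
by rewrite /evec /= mxE; case: (_ && _); rewrite ?normr1 ?normr0 ?ler01.
Qed.

Lemma line_eq (f : V -> R) (y v : V) (s : R) :
  (fun h : R => h^-1 *: (((fun t : R => f (y + t *: v)) \o shift s) (h *: 1) - f (y + s *: v)))
  = (fun h : R => h^-1 *: ((f \o shift (y + s *: v)) (h *: v) - f (y + s *: v))).
Proof.
apply: funext => h /=; congr (_ *: (f _ - _)).
by rewrite [_%:A]mulr1 scalerDl addrCA.
Qed.

Lemma D_line (f : V -> R) (y v : V) (s : R) :
  'D_1 (fun t : R => f (y + t *: v)) s = 'D_v f (y + s *: v).
Proof. by rewrite /derive line_eq. Qed.

Lemma derivable_line (f : V -> R) (y v : V) (s : R) :
  derivable f (y + s *: v) v -> derivable (fun t : R => f (y + t *: v)) s 1.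
Proof. by rewrite /derivable line_eq. Qed.

Lemma D_comp (f : V -> R) (p : R -> R) (y v : V) :
  differentiable f y -> derivable p (f y) 1 ->
  'D_v (p \o f) y = derive1 p (f y) * 'D_v f y.
Proof.
move=> df dp1; have dp : differentiable p (f y) by apply/derivable1_diffP.
have dc : differentiable (p \o f) y by apply: differentiable_comp.
rewrite deriveE // diff_comp // /= deriv1E // deriveE //.
by rewrite mulrC.
Qed.

Lemma derivable_comp (f : V -> R) (p : R -> R) (y v : V) :
  differentiable f y -> derivable p (f y) 1 -> derivable (p \o f) y v.
Proof.
move=> df dp1; have dp : differentiable p (f y) by apply/derivable1_diffP.
by apply: diff_derivable; apply: differentiable_comp.
Qed.

Lemma Dpart_diff (f : V -> R) (i : 'I_d) (y : V) :
  differentiable (grad f) y -> differentiable (fun z => 'D_(evec R i) f z) y.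
Proof.
move=> h.
have -> : (fun z => 'D_(evec R i) f z) = (fun N : V => N i ord0) \o grad f.
  by apply: funext => z /=; rewrite /grad mxE.
exact: (differentiable_comp h (differentiable_coord _ i ord0)).
Qed.

Lemma grad_comp (f : V -> R) (p : R -> R) (x : V) :
  differentiable f x -> derivable p (f x) 1 ->
  grad (p \o f) x = derive1 p (f x) *: grad f x.
Proof.
move=> df dp; apply/matrixP => i j; rewrite !mxE D_comp //.
Qed.

Lemma hess_comp (f : V -> R) (p : R -> R) (x : V) :
  (forall y, differentiable f y) -> differentiable (grad f) x ->
  (forall t, derivable p t 1) -> (forall t, derivable (derive1 p) t 1) ->
  hess (p \o f) x = derive1 p (f x) *: hess f x
     + derive1 (derive1 p) (f x) *: (grad f x *m (grad f x)^T).
Proof.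
move=> df dg dp dp2; apply/matrixP => i j; rewrite !mxE.
have -> : (fun y => 'D_(evec R i) (p \o f) y)
    = ((derive1 p \o f) * (fun y => 'D_(evec R i) f y)).
  by apply: funext => y; rewrite D_comp.
rewrite deriveM; last 2 first.
- exact: derivable_comp.
- exact/diff_derivable/Dpart_diff.
rewrite D_comp // big_ord1 !mxE /=.
rewrite /GRing.scale /=; congr (_ + _).
by rewrite mulrCA.
Qed.

Section Schwarz.
Variables (f : V -> R) (hf1 : forall y, differentiable f y) (x : V)
  (dG : differentiable (grad f) x).

Lemma Dpart_eq (F : V -> R) (i : 'I_d) :
  (fun z => 'D_(evec R i) F z) = (fun z => grad F z i ord0).
Proof. by apply: funext => z; rewrite /grad mxE. Qed.

Lemma hessE (i j : 'I_d) : hess f x i j = ('d (grad f) x (evec R j)) i ord0.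
Proof.
rewrite /hess mxE Dpart_eq.
rewrite -deriveE //.
rewrite derive_mx ?mxE //; exact: diff_derivable.
Qed.
End Schwarz.
End An.

End PB.
Import PB.

Module PC.
Set Implicit Arguments. Unset Strict Implicit. Unset Printing Implicit Defensive.
Local Open Scope classical_set_scope.
Local Open Scope ring_scope.

Section Schwarz2.
Variables (R : realType) (d : nat).
Local Notation V := 'cV[R]_d.
Variables (f : V -> R) (hf1 : forall y, differentiable f y) (x : V)
  (dG : differentiable (grad f) x).

Definition gfun (i j : 'I_d) (t s : R) :=
  f ((x + t *: evec R j) + s *: evec R i) - f (x + s *: evec R i).

Lemma gfunE i j t : gfun i j t =
  (fun s : R => f ((x + t *: evec R j) + s *: evec R i)) - (fun s : R => f (x + s *: evec R i)).
Proof. by apply: funext. Qed.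

Lemma gfun_derivable i j t s : derivable (gfun i j t) s 1.
Proof.
Time rewrite gfunE; apply: derivableB; apply: derivable_line; exact: diff_derivable.
Qed.

Lemma gfun_D i j t s : 'D_1 (gfun i j t) s =
  grad f ((x + t *: evec R j) + s *: evec R i) i ord0
  - grad f (x + s *: evec R i) i ord0.
Proof.
Time rewrite gfunE deriveB; try (apply: derivable_line; exact: diff_derivable).
Time by rewrite !D_line !mxE.
Qed.
Lemma mvt_step i j t : 0 < t -> exists2 c, c \in `]0, t[ &
  gfun i j t t - gfun i j t 0 =
   (grad f ((x + t *: evec R j) + c *: evec R i) i ord0
    - grad f (x + c *: evec R i) i ord0) * t.
Proof.
move=> t0.
have := @MVT R (gfun i j t) (fun s => 'D_1 (gfun i j t) s) 0 t t0.
case.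
- by move=> s _; apply: derivableP; apply: gfun_derivable.
- apply: continuous_subspaceT => s.
  apply: differentiable_continuous; apply/derivable1_diffP.
  exact: gfun_derivable.
by move=> c c0 e; exists c => //; rewrite e gfun_D subr0.
Qed.

Lemma rem_bound : exists k : V -> V,
  (forall h, grad f (h + x) = grad f x + 'd (grad f) x h + k h) /\
  forall e : R, 0 < e -> exists2 del : R, 0 < del &
     forall h : V, `|h| < del -> `|k h| <= e * `|h|.
Proof.
move: (diff_locally dG); set k := (X in _ = _ + X) => hk.
exists k; split.
  by move=> h; have := congr1 (fun F => F h) hk.
move=> e e0.
have /eqoP := littleo_eqo k.
move=> /(_ e e0) /nbhs_norm0P [del del0 hdel].
by exists del => // h hh; apply: hdel.
Qed.
Lemma norm_comb (a b : R) (u v : V) : 0 <= a -> 0 <= b ->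
  `|u| <= 1 -> `|v| <= 1 -> `|a *: u + b *: v| <= a + b.
Proof.
move=> a0 b0 u1 v1; apply: (le_trans (ler_normD _ _)).
rewrite !normrZ (ger0_norm a0) (ger0_norm b0) lerD //.
  by rewrite -[X in _ <= X]mulr1 ler_wpM2l.
by rewrite -[X in _ <= X]mulr1 ler_wpM2l.
Qed.

Lemma est (k : V -> V)
  (hk : forall h, grad f (h + x) = grad f x + 'd (grad f) x h + k h)
  (e del : R) (hdel : forall h : V, `|h| < del -> `|k h| <= e * `|h|)
  (e0 : 0 < e) i j t : 0 < t -> t * 2 < del ->
  `|(gfun i j t t - gfun i j t 0) - t ^+ 2 * ('d (grad f) x (evec R j)) i ord0|
    <= 3 * e * t ^+ 2.
Proof.
move=> t0 t2.
have [c] := mvt_step i j t0; rewrite in_itv /= => /andP[c0 ct] ->.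
set h1 := t *: evec R j + c *: evec R i.
set h2 := c *: evec R i.
have E1 : x + t *: evec R j + c *: evec R i = h1 + x by rewrite /h1 [RHS]addrC addrA.
have E2 : x + c *: evec R i = h2 + x by rewrite addrC.
rewrite E1 E2 !hk /h1 linearD linearZ /=.
set H := 'd (grad f) x (evec R j).
set D := 'd (grad f) x h2.
have -> : ((grad f x + (t *: H + D) + k h1) i ord0 - (grad f x + D + k h2) i ord0) * t
   - t ^+ 2 * H i ord0 = t * (k h1 i ord0 - k h2 i ord0).
  rewrite !mxE; ring.
have nh1 : `|h1| <= t + c by apply: norm_comb; rewrite ?norm_evec // ltW.
have nh2 : `|h2| <= c.
  rewrite /h2 normrZ ger0_norm ?(ltW c0) //; have := @norm_evec R d i; nra.
have k1 : `|k h1| <= e * `|h1| by apply: hdel; apply: (le_lt_trans nh1); lra.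
have k2 : `|k h2| <= e * `|h2| by apply: hdel; apply: (le_lt_trans nh2); lra.
have a1 := norm_entry (k h1) i ord0.
have a2 := norm_entry (k h2) i ord0.
rewrite normrM (ger0_norm (ltW t0)).
have : `|k h1 i ord0 - k h2 i ord0| <= 3 * e * t.
  apply: (le_trans (ler_normB _ _)).
  have := ler_wpM2l (ltW e0) nh1.
  have := ler_wpM2l (ltW e0) nh2.
  have := ler_wpM2l (ltW e0) (ltW ct).
  lra.
move=> hh; rewrite expr2.
have := ler_wpM2l (ltW t0) hh. lra.
Qed.
Lemma gfun_sym i j t : gfun i j t t - gfun i j t 0 = gfun j i t t - gfun j i t 0.
Proof.
rewrite /gfun !scale0r !addr0 (addrAC x (t *: evec R j)); ring.
Qed.

Lemma sym_bound i j (e : R) : 0 < e ->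
  let a := ('d (grad f) x (evec R j)) i ord0 in
  let b := ('d (grad f) x (evec R i)) j ord0 in
  a - b <= 6 * e /\ b - a <= 6 * e.
Proof.
move=> e0 a b.
have [k [hk hb]] := rem_bound.
have [del del0 hdel] := hb e e0.
set t := del / 4.
have t0 : 0 < t by rewrite /t; lra.
have t2 : t * 2 < del by rewrite /t; lra.
have h1 := est hk hdel e0 i j t0 t2.
have h2 := est hk hdel e0 j i t0 t2.
rewrite -gfun_sym in h2.
move: h1 h2; rewrite -/a -/b !ler_norml => /andP[h1 h1'] /andP[h2 h2'].
have tt0 : 0 < t ^+ 2 by rewrite exprn_gt0.
split.
- have : t ^+ 2 * (a - b) <= t ^+ 2 * (6 * e) by lra.
  by rewrite ler_pM2l.
- have : t ^+ 2 * (b - a) <= t ^+ 2 * (6 * e) by lra.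
  by rewrite ler_pM2l.
Qed.

Lemma hess_sym i j : hess f x i j = hess f x j i.
Proof.
rewrite (hessE dG i j) (hessE dG j i).
set a := ('d (grad f) x (evec R j)) i ord0.
set b := ('d (grad f) x (evec R i)) j ord0.
have [hab|hab|->] := ltgtP a b; last by [].
- have e0 : 0 < (b - a) / 12 by lra.
  have [_ h] := sym_bound i j e0; rewrite -/a -/b in h; lra.
- have e0 : 0 < (a - b) / 12 by lra.
  have [h _] := sym_bound i j e0; rewrite -/a -/b in h; lra.
Qed.
End Schwarz2.

End PC.
Import PC.

Unset Implicit Arguments.
Local Open Scope ring_scope.


Lemma pinv_pen (R : realType) (d : nat) (A : 'M[R]_d) : penroseR A (Defs.pinv A).
Proof.
have := @xgetPex _ 0 [set B | penrose A B] (penrose_exists A).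
by [].
Qed.

Theorem corollary1 (R : realType) (d : nat) (f : 'cV[R]_d -> R) (phi : R -> R)
  (alpha_phi : 'cV[R]_d -> R) (x0 : 'cV[R]_d)
  (* f twice differentiable *)
  (hf1 : forall x, differentiable f x)
  (hf2 : forall x, differentiable (grad f) x)
  (* phi twice differentiable *)
  (hphi1 : forall t, derivable phi t 1)
  (hphi2 : forall t, derivable (derive1 phi) t 1)
  (* at every iterate: alpha(x) is defined and grad f x lies in Range(hess f x) *)
  (hdef : forall k, let x := newton f (alpha_sched f phi alpha_phi) x0 k in
     [/\ derive1 phi (f x) != 0,
         1 + derive1 (derive1 phi) (f x) / derive1 phi (f x)
               * dnorm2 f x (grad f x) != 0
       & exists v : 'cV[R]_d, grad f x = hess f x *m v]) :
  forall k, newton f (alpha_sched f phi alpha_phi) x0 k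
            = newton (phi \o f) alpha_phi x0 k.
Proof.
elim=> [//|k IH] /=.
rewrite -IH.
have [c0 cs0 [v gv]] := hdef k; move: c0 cs0 gv.
set x := newton f (alpha_sched f phi alpha_phi) x0 k => c0 cs0 gv.
congr (_ - _).
set c := derive1 phi (f x).
set e := derive1 (derive1 phi) (f x).
set g := grad f x.
set H := hess f x.
have HT : H^T = H by apply/matrixP => i j; rewrite mxE /H (hess_sym hf1 (hf2 x)).
have eA : hess (phi \o f) x = c *: H + e *: (g *m g^T) by exact: hess_comp.
have cs1 : c + e * (g^T *m Defs.pinv H *m g) ord0 ord0 != 0.
  have -> : c + e * (g^T *m Defs.pinv H *m g) ord0 ord0
        = c * (1 + e / c * dnorm2 f x (grad f x)) by rewrite /dnorm2; field.
  by rewrite mulf_neq0.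
have K := key HT (pinv_pen _ _ H) gv c0 cs1 eA (pinv_pen _ _ _).
rewrite (grad_comp (hf1 x) (hphi1 _)) -/c -/g.
have c0c : c != 0 by [].
exact: (final_step (alpha_phi x) c0c cs1 K).
Qed.
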